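(* Let $\alpha\in\mathbb{R}$, let $\kappa\in\mathbb{N}_0\cup\{\infty\}$ and let $(s_j)_{j=0}^{\kappa}$ be a sequence of Hermitian complex $q\times q$ matrices. Let $\mathcal{G}$ be a subset of $\mathbb{C}$ with $\mathcal{G}\setminus\mathbb{R}\ne\emptyset$. Further, let $f\colon\mathcal{G}\to\mathbb{C}^{q\times q}$ be a matrix-valued function, let $\mathcal{G}^\vee:=\{z\in\mathbb{C}:\bar z\in\mathcal{G}\}$, and let $f^\vee\colon\mathcal{G}^\vee\to\mathbb{C}^{q\times q}$ be defined by $f^\vee(z):=f^*(\bar z)$. For each $k\in\{-1,0,\dots,\kappa\}$ and each $z\in\mathcal{G}^\vee\setminus\mathbb{R}$, there is a complex $(m_k+2)q\times(m_k+2)q$ matrix $X_k(z)$ such that $P_k^{[f^\vee]}(z)=X_k(z)P_k^{[f]}(\bar z)X_k^*(z)$.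
   Context: Here $m_{-1}$ is understood so that $P_{-1}$ is $q\times q$ (i.e. $(m_{-1}+2)q=q$), and $m_{2k}:=k$, $m_{2k+1}:=k$ for $k\in\mathbb{N}_0$. Notation: $s_{-1}:=0$, $s_{\alpha\triangleright j}:=-\alpha s_j+s_{j+1}$, $H_n:=[s_{j+k}]_{j,k=0}^n$, $H_{\alpha\triangleright n}:=[s_{\alpha\triangleright j+k}]_{j,k=0}^n$, $y_{0,n}:=\operatorname{col}(s_j)_{j=0}^n$, $u_n:=-\operatorname{col}(s_{j-1})_{j=0}^n$, $T_{q,n}:=[\delta_{j,k+1}I_q]_{j,k=0}^n$, $v_{q,n}:=\operatorname{col}(\delta_{j,0}I_q)_{j=0}^n$, $R_{T_{q,n}}(z):=(I_{(n+1)q}-zT_{q,n})^{-1}$. For $z\in\mathcal{G}\setminus\mathbb{R}$: $P_{2n}^{[f]}(z):=\begin{bmatrix}H_n & R_{T_{q,n}}(z)[v_{q,n}f(z)-u_n]\\ (R_{T_{q,n}}(z)[v_{q,n}f(z)-u_n])^* & \frac{f(z)-f^*(z)}{z-\bar z}\end{bmatrix}$ for $2n\le\kappa$; $P_{2n+1}^{[f]}(z):=\begin{bmatrix}H_{\alpha\triangleright n} & B(z)\\ B(z)^* & \frac{(z-\alpha)f(z)-[(z-\alpha)f(z)]^*}{z-\bar z}\end{bmatrix}$ with $B(z):=R_{T_{q,n}}(z)(v_{q,n}(z-\alpha)f(z)-(-\alpha u_n-y_{0,n}))$ for $2n+1\le\kappa$; and $P_{-1}^{[f]}(z):=\frac{(z-\alpha)f(z)-[(z-\alpha)f(z)]^*}{z-\bar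 z}$. *)

(* Defs.v *)
From HB Require Import structures.
From mathcomp Require Import all_boot all_order all_algebra.
From mathcomp Require Import reals.
From mathcomp Require Export complex.
Set Implicit Arguments. Unset Strict Implicit. Unset Printing Implicit Defensive.
Import Order.TTheory GRing.Theory Num.Theory.
Local Open Scope ring_scope.

Section Defs.
Variable R : realType.
Local Notation C := R[i].

Definition adjmx (m n : nat) (A : 'M[C]_(m, n)) : 'M[C]_(n, m) := (map_mx Num.conj A)^T.

(* kappa in N_0 \cup {oo}: Some K = K, None = oo.  leK j kappa <-> j <= kappa *)
Definition leK (j : nat) (kappa : option nat) : bool :=
  if kappa is Some K then (j <= K)%N else true.

Lemma modq_lt (m q : nat) (i : 'I_(m * q)) : (i %% q < q)%N.
Proof.
case: q i => [|q] i; last by rewrite ltn_mod.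
by case: i => i; rewrite muln0.
Qed.

Variable q : nat.

(* block (n+1)q x (n+1)q matrix [B j k]_{j,k=0}^n, blocks q x q *)
Definition blkmx (n : nat) (B : nat -> nat -> 'M[C]_q) : 'M[C]_(n.+1 * q) :=
  \matrix_(i, j) B (i %/ q)%N (j %/ q)%N (Ordinal (modq_lt i)) (Ordinal (modq_lt j)).

Definition blkcol (n : nat) (B : nat -> 'M[C]_q) : 'M[C]_(n.+1 * q, q) :=
  \matrix_(i, j) B (i %/ q)%N (Ordinal (modq_lt i)) j.

Definition Tmx (n : nat) : 'M[C]_(n.+1 * q) :=
  blkmx n (fun j k => if j == k.+1 then 1%:M else 0).
Definition vmx (n : nat) : 'M[C]_(n.+1 * q, q) :=
  blkcol n (fun j => if j == 0%N then 1%:M else 0).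
Definition RT (n : nat) (z : C) : 'M[C]_(n.+1 * q) := invmx (1%:M - z *: Tmx n).

Variable s : nat -> 'M[C]_q.
Variable alpha : R.
Local Notation a := ((alpha%:C)%C : C).

Definition sprev (j : nat) : 'M[C]_q := if j is j'.+1 then s j' else 0.
Definition sa (j : nat) : 'M[C]_q := - (a *: s j) + s j.+1.
Definition Hmx (n : nat) := blkmx n (fun j k => s (j + k)%N).
Definition Hamx (n : nat) := blkmx n (fun j k => sa (j + k)%N).
Definition y0 (n : nat) := blkcol n s.
Definition umx (n : nat) := - blkcol n sprev.

Definition Dq (g : 'M[C]_q) (z : C) : 'M[C]_q := (z - Num.conj z)^-1 *: (g - adjmx g).

Variable f : C -> 'M[C]_q.

Definition Peven (n : nat) (z : C) : 'M[C]_(n.+1 * q + q) :=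
  let B := RT n z *m (vmx n *m f z - umx n) in
  block_mx (Hmx n) B (adjmx B) (Dq (f z) z).

Definition Podd (n : nat) (z : C) : 'M[C]_(n.+1 * q + q) :=
  let g := (z - a) *: f z in
  let B := RT n z *m (vmx n *m g - (- (a *: umx n) - y0 n)) in
  block_mx (Hamx n) B (adjmx B) (Dq g z).

Definition Pm1 (z : C) : 'M[C]_q := Dq ((z - a) *: f z) z.

End Defs.

(* (m_k + 2) for k in {-1, 0, 1, ...}: m_{-1}+2 = 1, m_{2n}+2 = m_{2n+1}+2 = n+2 *)
Definition msz (k : int) : nat := match k with Posz n => (n./2).+2 | Negz _ => 1%N end.

Lemma msz_pos (n q : nat) : ((n./2).+2 * q = (n./2).+1 * q + q)%N.
Proof. by rewrite [((n./2).+2 * q)%N]mulSn addnC. Qed.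
Lemma msz_neg (q : nat) : (1 * q = q)%N.
Proof. by rewrite mul1n. Qed.

Definition Pk (R : realType) (q : nat) (s : nat -> 'M[R[i]]_q) (alpha : R)
    (f : R[i] -> 'M[R[i]]_q) (k : int) (z : R[i]) : 'M[R[i]]_(msz k * q) :=
  match k as k0 return 'M[R[i]]_(msz k0 * q) with
  | Posz n =>
      castmx (esym (msz_pos n q), esym (msz_pos n q))
        (if odd n then Podd s alpha f (n./2) z else Peven s f (n./2) z)
  | Negz _ => castmx (esym (msz_neg q), esym (msz_neg q)) (Pm1 alpha f z)
  end.

(* Main.v *)
Require Import Defs.
From HB Require Import structures.
From mathcomp Require Import all_boot all_order all_algebra.
From mathcomp Require Import reals complex.
Import Order.TTheory GRing.Theory Num.Theory.
Local Open Scope ring_scope.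
From mathcomp Require Import ring zify.
Set Implicit Arguments. Unset Strict Implicit. Unset Printing Implicit Defensive.
Import Order.TTheory GRing.Theory Num.Theory.
Local Open Scope ring_scope.

Section Adj.
Variable R : realType.
Local Notation C := R[i].

Lemma adjmxD m n (A B : 'M[C]_(m, n)) : adjmx (A + B) = adjmx A + adjmx B.
Proof. by apply/matrixP => i j; rewrite !mxE rmorphD. Qed.
Lemma adjmxN m n (A : 'M[C]_(m, n)) : adjmx (- A) = - adjmx A.
Proof. by apply/matrixP => i j; rewrite !mxE rmorphN. Qed.
Lemma adjmxB m n (A B : 'M[C]_(m, n)) : adjmx (A - B) = adjmx A - adjmx B.
Proof. by rewrite adjmxD adjmxN. Qed.
Lemma adjmxM m n p (A : 'M[C]_(m, n)) (B : 'M[C]_(n, p)) :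
  adjmx (A *m B) = adjmx B *m adjmx A.
Proof. by rewrite /adjmx map_mxM trmx_mul. Qed.
Lemma adjmxZ m n (c : C) (A : 'M[C]_(m, n)) : adjmx (c *: A) = Num.conj c *: adjmx A.
Proof. by apply/matrixP => i j; rewrite !mxE rmorphM. Qed.
Lemma adjmxK m n (A : 'M[C]_(m, n)) : adjmx (adjmx A) = A.
Proof. by apply/matrixP => i j; rewrite !mxE conjCK. Qed.
Lemma adjmx1 n : adjmx (1%:M : 'M[C]_n) = 1%:M.
Proof. by rewrite /adjmx map_mx1 trmx1. Qed.
Lemma adjmx0 m n : adjmx (0 : 'M[C]_(m, n)) = 0.
Proof. by rewrite /adjmx map_mx0 trmx0. Qed.
Lemma adjmx_block m1 m2 n1 n2 (a : 'M[C]_(m1, n1)) (b : 'M[C]_(m1, n2))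
  (c : 'M[C]_(m2, n1)) (d : 'M[C]_(m2, n2)) :
  adjmx (block_mx a b c d) = block_mx (adjmx a) (adjmx c) (adjmx b) (adjmx d).
Proof. by rewrite /adjmx map_block_mx tr_block_mx. Qed.
End Adj.
Lemma expand3 (R : realType) N (a b : R[i]) (T H Ta : 'M[R[i]]_N) :
  (1%:M - a *: T) *m H *m (1%:M - b *: Ta) =
  H - a *: (T *m H) - b *: (H *m Ta) + (a * b) *: (T *m H *m Ta).
Proof.
rewrite (mulmxBl 1%:M (a *: T) H) mul1mx.
rewrite (mulmxBl H (a *: T *m H)).
rewrite (mulmxBr H 1%:M) mulmx1 (mulmxBr (a *: T *m H) 1%:M) mulmx1.
rewrite -scalemxAl -scalemxAr -scalemxAr -scalemxAl scalerA.
move: (T *m H) (H *m Ta) (T *m H *m Ta) => Y1 Y2 Y3.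
by apply/matrixP => i j; rewrite !mxE; ring.
Qed.

Lemma TLl (R : realType) N q (Rz Mw H Mwa Rza Rwa : 'M[R[i]]_N) (v u : 'M[R[i]]_(N,q))
 (va ua : 'M[R[i]]_(q,N)) (ga : 'M[R[i]]_q) (c : R[i]) :
 Rwa *m Mwa = 1%:M ->
 Rz *m (Mw *m H *m Mwa + c *: (u *m va - v *m ua)) *m Rza =
 (Rz *m Mw *m H + c *: (Rz *m v) *m ((ga *m va - ua) *m Rwa)) *m (Mwa *m Rza)
   + Rz *m (v *m ga - u) *m (- c *: (va *m Rza)).
Proof.
move=> RM.
do 3 rewrite ?mulmxDl ?mulmxDr ?mulmxBl ?mulmxBr ?mulmxN ?mulNmx -?scalemxAl -?scalemxAr ?scaleNr ?mulmxA.
rewrite -!(mulmxA _ Rwa Mwa) RM !mulmx1.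
move: (Rz *m Mw *m H *m Mwa *m Rza) (Rz *m u *m va *m Rza) (Rz *m v *m ua *m Rza)
  (Rz *m v *m ga *m va *m Rza) => P1 P2 P3 P4.
by apply/matrixP => i j; rewrite !mxE; ring.
Qed.

Lemma inner_l (R : realType) N q (T H Ta : 'M[R[i]]_N) (u v : 'M[R[i]]_(N, q))
  (ua va : 'M[R[i]]_(q, N)) (z w : R[i]) :
  H *m Ta - T *m H = u *m va - v *m ua ->
  (1%:M - w *: T) *m H *m (1%:M - z *: Ta) + (z - w) *: (u *m va - v *m ua) =
  (1%:M - z *: T) *m H *m (1%:M - w *: Ta).
Proof.
move=> h; rewrite -h !expand3.
move: (T *m H) (H *m Ta) (T *m H *m Ta) => Y1 Y2 Y3.
by apply/matrixP => i j; rewrite !mxE; ring.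
Qed.

Section Key.
Variable R : realType.
Local Notation C := R[i].
Variables (N q : nat) (T H : 'M[C]_N) (v u : 'M[C]_(N, q)).
Hypothesis HT : H *m adjmx T - T *m H = u *m adjmx v - v *m adjmx u.
Hypothesis Hunit : forall x : C, 1%:M - x *: T \in unitmx.

Definition PP (g : 'M[C]_q) (x : C) :=
  let B := invmx (1%:M - x *: T) *m (v *m g - u) in
  block_mx H B (adjmx B) (Dq g x).

Lemma key (g : 'M[C]_q) (z : C) : z \isn't Num.real ->
  exists X, PP (adjmx g) z = X *m PP g (Num.conj z) *m adjmx X.
Proof.
move=> zNr.
set w := Num.conj z.
have wz : Num.conj w = z by rewrite /w conjCK.
have cn0 : z - w != 0.
  by rewrite subr_eq0 eq_sym; apply: contra zNr => /eqP h; apply/CrealP.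
set c := z - w.
have cc : Num.conj c = - c.
  by rewrite /c rmorphB /= /w conjCK opprB.
set Mz := 1%:M - z *: T; set Mw := 1%:M - w *: T.
set Rz := invmx Mz; set Rw := invmx Mw.
have RzMz : Rz *m Mz = 1%:M := mulVmx (Hunit z).
have MwRw : Mw *m Rw = 1%:M := mulmxV (Hunit w).
set A := Rz *m Mw.
set Bx := c *: (Rz *m v).
set B := Rw *m (v *m g - u).
set D := Dq g w.
set B' := Rz *m (v *m adjmx g - u).
have DE : D = - c^-1 *: (g - adjmx g).
  by rewrite /D /Dq /w conjCK -opprB invrN.
have TR : A *m B + Bx *m D = B'.
  rewrite /A /B mulmxA -(mulmxA Rz) MwRw mulmx1 /Bx DE -scalemxAl -scalemxAr scalerA.
  rewrite mulrN mulfV // scaleN1r /B' -mulmxA -mulmxN -mulmxDr; congr (_ *m _).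
  rewrite mulmxBr; set X1 := v *m g; set X2 := v *m adjmx g.
  by apply/matrixP => i j; rewrite !mxE; ring.
have DH : adjmx D = D.
  rewrite DE adjmxZ adjmxB adjmxK rmorphN fmorphV /= cc invrN opprK.
  by rewrite scaleNr -scalerN opprB.
have Mwa : adjmx Mw = 1%:M - z *: adjmx T.
  by rewrite /Mw (adjmxB 1%:M (w *: T)) (adjmxZ w T) (@adjmx1 R N) wz.
have Mza : adjmx Mz = 1%:M - w *: adjmx T.
  by rewrite /Mz (adjmxB 1%:M (z *: T)) (adjmxZ z T) (@adjmx1 R N).
have inner : Mw *m H *m adjmx Mw + c *: (u *m adjmx v - v *m adjmx u)
             = Mz *m H *m adjmx Mz.
  rewrite Mwa Mza /Mw /Mz /c; exact: (inner_l z w HT).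
exists (block_mx A Bx 0 1%:M).
have -> : PP g w = block_mx H B (adjmx B) D by [].
have -> : PP (adjmx g) z = block_mx H B' (adjmx B') (Dq (adjmx g) z) by [].
rewrite adjmx_block !mulmx_block adjmx0 adjmx1.
rewrite (mul0mx _ H) (mul0mx _ B) (mul1mx (adjmx B)) (mul1mx D) !add0r.
rewrite !mulmx0 add0r (mulmx1 (A *m B + Bx *m D)) (mulmx1 D) TR.
have -> : adjmx B *m adjmx A + D *m adjmx Bx = adjmx B'.
  by rewrite -TR adjmxD !adjmxM DH.
have -> : Dq (adjmx g) z = D.
  by rewrite DE /Dq adjmxK -/w -/c scaleNr -scalerN opprB.
congr block_mx; last by rewrite add0r.
have HH : Rz *m (Mz *m H *m adjmx Mz) *m adjmx Rz = H.
  rewrite !mulmxA RzMz (mul1mx H) -mulmxA -adjmxM RzMz adjmx1.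
  by rewrite (mulmx1 H).
have RwMwa : adjmx Rw *m adjmx Mw = 1%:M by rewrite -adjmxM MwRw adjmx1.
rewrite -{1}HH -inner.
rewrite /A /Bx /B /B' adjmxZ cc !adjmxM (adjmxB (v *m g) u) (adjmxM v g).
exact: TLl.
Qed.
End Key.
Lemma idx_eq (q i j : nat) : (0 < q)%N ->
  (i == j + q)%N = ((i %/ q == (j %/ q).+1) && (i %% q == j %% q))%N.
Proof.
move=> q0; apply/eqP/andP => [->|[/eqP hd /eqP hm]].
  split; apply/eqP; last by rewrite modnDr.
  by rewrite -{1}(mul1n q) divnDMl // addn1.
by rewrite (divn_eq i q) hd hm mulSn -addnA -divn_eq addnC.
Qed.

Section Blk.
Variables (R : realType) (q' n : nat).
Local Notation q := q'.+1.
Local Notation C := R[i].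
Local Notation N := (n.+1 * q)%N.

Lemma adjmxE m k (A : 'M[C]_(m, k)) i j : adjmx A i j = Num.conj (A j i).
Proof. by rewrite !mxE. Qed.

Lemma ordq (i : 'I_N) : Ordinal (modq_lt i) = inord (i %% q)%N.
Proof. by apply: val_inj; rewrite /= inordK // ltn_mod. Qed.

Lemma blkmxE (B : nat -> nat -> 'M[C]_q) (i j : 'I_N) :
  blkmx n B i j = B (i %/ q)%N (j %/ q)%N (inord (i %% q)%N) (inord (j %% q)%N).
Proof. by rewrite mxE !ordq. Qed.

Lemma blkcolE (B : nat -> 'M[C]_q) (i : 'I_N) j :
  blkcol n B i j = B (i %/ q)%N (inord (i %% q)%N) j.
Proof. by rewrite mxE !ordq. Qed.

Lemma TmxE (i j : 'I_N) : Tmx R q n i j = ((i : nat) == j + q)%N%:R.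
Proof.
rewrite blkmxE idx_eq //; case: eqP => h /=; rewrite mxE //.
have -> : (inord (i %% q)%N == inord (j %% q)%N :> 'I_q) = (i %% q == j %% q)%N.
  by apply/eqP/eqP => [/(congr1 val)|->//]; rewrite /= !inordK ?ltn_mod.
by [].
Qed.

Lemma vmxE (i : 'I_N) (j : 'I_q) : vmx R q n i j = ((i : nat) == j)%N%:R.
Proof.
rewrite blkcolE; case: eqP => h; rewrite mxE.
  have iq : (i < q)%N by rewrite ltnNge -(divn_gt0 _ (ltn0Sn q')) h.
  have -> : (inord (i %% q)%N == j) = ((i : nat) == j).
    by rewrite -val_eqE /= inordK modn_small.
  by [].
case: eqP => // hij; exfalso; apply: h; rewrite hij divn_small //.
Qed.

Lemma sum_delta_in M (F : 'I_M -> C) (k0 : 'I_M) (m : nat) : m = k0 ->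
  \sum_(k < M) F k * (m == k)%N%:R = F k0.
Proof.
move=> ->; rewrite (bigD1 k0) //= eqxx mulr1 big1 ?addr0 // => k hk.
by rewrite val_eqE eq_sym (negbTE hk) mulr0.
Qed.

Lemma sum_delta_out M (F : 'I_M -> C) (m : nat) : (M <= m)%N ->
  \sum_(k < M) F k * (m == k)%N%:R = 0.
Proof.
move=> hm; rewrite big1 // => k _.
by rewrite (_ : (m == k)%N = false) ?mulr0 //; apply/negbTE; rewrite neq_ltn (leq_trans (ltn_ord k) hm) orbT.
Qed.

Lemma mulTa_in (A : 'M[C]_N) (i j k0 : 'I_N) : (j : nat) = (k0 + q)%N ->
  (A *m adjmx (Tmx R q n)) i j = A i k0.
Proof.
move=> hj; rewrite mxE.
under eq_bigr => k _ do rewrite adjmxE TmxE rmorph_nat hj eqn_add2r.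
exact: sum_delta_in.
Qed.

Lemma mulTa_out (A : 'M[C]_N) (i j : 'I_N) : (j < q)%N ->
  (A *m adjmx (Tmx R q n)) i j = 0.
Proof.
move=> hj; rewrite mxE big1 // => k _; rewrite adjmxE TmxE rmorph_nat.
rewrite (_ : ((j : nat) == k + q)%N = false) ?mulr0 //; apply/negbTE.
by rewrite neq_ltn (leq_trans hj) // leq_addl.
Qed.

Lemma mulTA_in (A : 'M[C]_N) (i j k0 : 'I_N) : (i : nat) = (k0 + q)%N ->
  (Tmx R q n *m A) i j = A k0 j.
Proof.
move=> hi; rewrite mxE.
under eq_bigr => k _ do rewrite TmxE hi eqn_add2r mulrC.
exact: sum_delta_in.
Qed.

Lemma mulTA_out (A : 'M[C]_N) (i j : 'I_N) : (i < q)%N ->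
  (Tmx R q n *m A) i j = 0.
Proof.
move=> hi; rewrite mxE big1 // => k _; rewrite TmxE.
rewrite (_ : ((i : nat) == k + q)%N = false) ?mul0r //; apply/negbTE.
by rewrite neq_ltn (leq_trans hi) // leq_addl.
Qed.

Lemma mulUv_in (U : 'M[C]_(N, q)) (i j : 'I_N) (j' : 'I_q) : (j : nat) = j' ->
  (U *m adjmx (vmx R q n)) i j = U i j'.
Proof.
move=> hj; rewrite mxE.
under eq_bigr => k _ do rewrite adjmxE vmxE rmorph_nat.
exact: sum_delta_in.
Qed.

Lemma mulUv_out (U : 'M[C]_(N, q)) (i j : 'I_N) : (q <= j)%N ->
  (U *m adjmx (vmx R q n)) i j = 0.
Proof.
move=> hj; rewrite mxE.
under eq_bigr => k _ do rewrite adjmxE vmxE rmorph_nat.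
exact: sum_delta_out.
Qed.

Lemma mulvU_in (U : 'M[C]_(N, q)) (i j : 'I_N) (i' : 'I_q) : (i : nat) = i' ->
  (vmx R q n *m adjmx U) i j = Num.conj (U j i').
Proof.
move=> hi; rewrite mxE.
under eq_bigr => k _ do rewrite adjmxE vmxE mulrC.
exact: sum_delta_in.
Qed.

Lemma mulvU_out (U : 'M[C]_(N, q)) (i j : 'I_N) : (q <= i)%N ->
  (vmx R q n *m adjmx U) i j = 0.
Proof.
move=> hi; rewrite mxE.
under eq_bigr => k _ do rewrite adjmxE vmxE mulrC.
exact: sum_delta_out.
Qed.

End Blk.

Section HTs.
Variables (R : realType) (q' n : nat).
Local Notation q := q'.+1.
Local Notation C := R[i].
Local Notation N := (n.+1 * q)%N.
Variables (t : nat -> 'M[C]_q) (c0 : 'M[C]_q).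
Hypothesis tH : forall m, (m < n)%N -> adjmx (t m) = t m.
Hypothesis cH : adjmx c0 = c0.

Definition Hb := blkmx n (fun j k => t (j + k)%N).
Definition ub := - blkcol n (fun j => if j is j'.+1 then t j' else c0).

Lemma herm_entry (M : 'M[C]_q) : adjmx M = M -> forall a b, Num.conj (M a b) = M b a.
Proof. by move=> h a b; rewrite -adjmxE h. Qed.

Lemma ordE (x : 'I_N) (hx : (x < q)%N) : inord (x %% q)%N = Ordinal hx.
Proof. by apply: val_inj; rewrite /= inordK ?modn_small. Qed.

Lemma divDq k : ((k + q) %/ q = (k %/ q).+1)%N.
Proof. by rewrite -{1}(mul1n q) divnDMl // addn1. Qed.
Lemma modDq k : ((k + q) %% q = k %% q)%N.
Proof. by rewrite modnDr. Qed.

Lemma ubE (i : 'I_N) j : ub i j = - (if (i %/ q)%N is m.+1 then t m else c0) (inord (i %% q)%N) j.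
Proof. by rewrite mxE blkcolE. Qed.

Lemma HT_blk : Hb *m adjmx (Tmx R q n) - Tmx R q n *m Hb =
  ub *m adjmx (vmx R q n) - vmx R q n *m adjmx ub.
Proof.
apply/matrixP => i j.
rewrite [LHS]mxE [RHS]mxE.
rewrite [(- (_ *m _)) i j]mxE [(- (vmx _ _ _ *m _)) i j]mxE.
have bnd : forall (x k : 'I_N), (x : nat) = (k + q)%N -> (k %/ q < n)%N.
  move=> x k hx; have : (k + q < n * q + q)%N by rewrite -mulSnr -hx ltn_ord.
  rewrite ltn_add2r => h.
  by rewrite ltn_divLR.
have sub : forall x : 'I_N, (q <= x)%N -> (x - q < N)%N.
  by move=> x _; exact: leq_ltn_trans (leq_subr _ _) (ltn_ord x).
case: (ltnP i q) => hi; case: (ltnP j q) => hj.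
- rewrite mulTa_out // mulTA_out // subrr.
  rewrite (mulUv_in _ _ (j' := Ordinal hj)) // (mulvU_in _ _ (i' := Ordinal hi)) //.
  rewrite !ubE !divn_small // !ordE rmorphN /= herm_entry //.
  by rewrite opprK addrC subrr.
- set k0 := Ordinal (sub j hj).
  have hj0 : (j : nat) = (k0 + q)%N by rewrite /= subnK.
  rewrite (mulTa_in _ _ hj0) mulTA_out // subr0.
  rewrite mulUv_out // (mulvU_in _ _ (i' := Ordinal hi)) // sub0r.
  rewrite ubE hj0 divDq modDq blkmxE (divn_small hi) (ordE hi) add0n.
  by rewrite rmorphN /= opprK herm_entry // tH // (bnd _ _ hj0).
- set k1 := Ordinal (sub i hi).
  have hi1 : (i : nat) = (k1 + q)%N by rewrite /= subnK.
  rewrite (mulTA_in _ _ hi1) mulTa_out // sub0r.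
  rewrite (mulUv_in _ _ (j' := Ordinal hj)) // mulvU_out // subr0.
  by rewrite ubE hi1 divDq modDq blkmxE (divn_small hj) (ordE hj) addn0.
- set k0 := Ordinal (sub j hj).
  have hj0 : (j : nat) = (k0 + q)%N by rewrite /= subnK.
  set k1 := Ordinal (sub i hi).
  have hi1 : (i : nat) = (k1 + q)%N by rewrite /= subnK.
  rewrite (mulTa_in _ _ hj0) (mulTA_in _ _ hi1) mulUv_out // mulvU_out // subrr.
  by rewrite !blkmxE hi1 hj0 !divDq !modDq addSnnS subrr.
Qed.
End HTs.

Lemma unitT (R : realType) q' n (x : R[i]) :
  1%:M - x *: Tmx R q'.+1 n \in unitmx.
Proof.
have E : forall i j : 'I_(n.+1 * q'.+1), (1%:M - x *: Tmx R q'.+1 n) i j =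
    ((i : nat) == j)%:R - x * ((i : nat) == j + q'.+1)%N%:R.
  by move=> i j; move: (@TmxE R q' n i j); rewrite !mxE => h; rewrite h.
have tr : is_trig_mx (1%:M - x *: Tmx R q'.+1 n).
  apply/is_trig_mxP => i j hij; rewrite E.
  have -> : ((i : nat) == j)%N = false by apply/negbTE; rewrite neq_ltn hij.
  have -> : ((i : nat) == j + q'.+1)%N = false.
    by apply/negbTE; apply/eqP; lia.
  by rewrite mulr0 subr0.
rewrite unitmxE (det_trig tr) big1 ?unitr1 //.
move=> i _; rewrite E eqxx.
have -> : ((i : nat) == i + q'.+1)%N = false.
  by apply/negbTE; apply/eqP; lia.
by rewrite mulr0 subr0.
Qed.

Lemma DqE (R : realType) q (g : 'M[R[i]]_q) (z : R[i]) :
  Dq (adjmx g) z = Dq g (Num.conj z).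
Proof.
rewrite /Dq adjmxK conjCK.
by rewrite -[adjmx g - g]opprB scalerN -scaleNr -invrN opprB.
Qed.

Lemma cast_conj (R : realType) m1 m2 (e : m1 = m2) (X P : 'M[R[i]]_m1) :
  castmx (e, e) (X *m P *m adjmx X) =
  castmx (e, e) X *m castmx (e, e) P *m adjmx (castmx (e, e) X).
Proof. by case: m2 / e; rewrite !castmx_id. Qed.

Lemma conj_real_sub (R : realType) (z : R[i]) (al : R) :
  Num.conj (Num.conj z - (al%:C)%C) = z - (al%:C)%C.
Proof.
rewrite rmorphB /= conjCK; congr (_ - _).
by apply/CrealP; apply/complex_realP; exists al.
Qed.

Lemma uE_odd (R : realType) q' n (s : nat -> 'M[R[i]]_q'.+1) (alpha : R) :
  - ((alpha%:C)%C *: umx s n) - y0 s n = ub n (sa s alpha) (s 0%N).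
Proof.
apply/matrixP => i j; rewrite !mxE /sprev.
case: (_ %/ _)%N => [|m] /=; rewrite ?mxE; ring.
Qed.

Lemma half_le m : (m./2 + m./2 <= m)%N.
Proof. by rewrite addnn -{2}(odd_double_half m) leq_addl. Qed.

Unset Implicit Arguments.
Set Strict Implicit.

Theorem lemma4p8 (R : realType) (q : nat) (alpha : R) (kappa : option nat)
    (s : nat -> 'M[R[i]]_q)
    (Hherm : forall j : nat, leK j kappa -> adjmx (s j) = s j)
    (G : R[i] -> Prop)
    (HG : exists z : R[i], G z /\ z \isn't Num.real)
    (f : R[i] -> 'M[R[i]]_q) :
  let fvee := fun z : R[i] => adjmx (f (Num.conj z)) in
  forall k : int,
    (-1 <= k)%R ->
    (if kappa is Some K then (k <= K%:Z)%R else true) ->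
    forall z : R[i], G (Num.conj z) -> z \isn't Num.real ->
    exists X : 'M[R[i]]_(msz k * q),
      Pk s alpha fvee k z = X *m Pk s alpha f k (Num.conj z) *m adjmx X.
Proof.
move: s Hherm f; case: q => [|q'] s Hherm f fvee k hk hK z Gz zNr.
  exists 0; apply/matrixP => i; have := ltn_ord i; lia.
set w := Num.conj z.
set a := ((alpha%:C)%C : R[i]).
have ge : (z - a) *: fvee z = adjmx ((w - a) *: f w).
  by rewrite adjmxZ conj_real_sub.
case: k hk hK => [m|m] hk hK; last first.
  exists (castmx (esym (msz_neg q'.+1), esym (msz_neg q'.+1)) 1%:M).
  rewrite -cast_conj; congr castmx.
  rewrite (@adjmx1 R q'.+1) (mul1mx (Pm1 alpha f w)) (mulmx1 (Pm1 alpha f w)).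
  by rewrite /Pm1 -/a ge DqE.
have hs : forall j, (j <= m)%N -> adjmx (s j) = s j.
  move=> j hj; apply: Hherm; move: hK; case: kappa => //= K.
  by rewrite lez_nat => hmK; exact: leq_trans hj hmK.
have -> : Pk s alpha fvee (Posz m) z =
  castmx (esym (msz_pos m q'.+1), esym (msz_pos m q'.+1))
    (if odd m then Podd s alpha fvee m./2 z else Peven s fvee m./2 z) by [].
have -> : Pk s alpha f (Posz m) w =
  castmx (esym (msz_pos m q'.+1), esym (msz_pos m q'.+1))
    (if odd m then Podd s alpha f m./2 w else Peven s f m./2 w) by [].
have hm := half_le m.
case: (odd m).
- have tH : forall j, (j < m./2)%N -> adjmx (sa s alpha j) = sa s alpha j.
    move=> j hj; rewrite /sa adjmxD adjmxN adjmxZ !hs; try lia.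
    by rewrite conj_Creal //; apply/complex_realP; exists alpha.
  have HT := HT_blk tH (hs 0%N (leq0n m)).
  rewrite -uE_odd in HT.
  have [X hX] := key HT (unitT q' m./2) ((w - a) *: f w) zNr.
  exists (castmx (esym (msz_pos m q'.+1), esym (msz_pos m q'.+1)) X).
  rewrite -cast_conj; congr castmx.
  have -> : Podd s alpha fvee m./2 z = PP (Tmx R q'.+1 m./2) (Hamx s alpha m./2)
     (vmx R q'.+1 m./2) (- (a *: umx s m./2) - y0 s m./2) ((z - a) *: fvee z) z by [].
  rewrite ge; exact: hX.
- have tH : forall j, (j < m./2)%N -> adjmx (s j) = s j.
    by move=> j hj; rewrite hs //; lia.
  have cH : adjmx (0 : 'M[R[i]]_q'.+1) = 0 by rewrite adjmx0.
  have HT := HT_blk tH cH.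
  have [X hX] := key HT (unitT q' m./2) (f w) zNr.
  exists (castmx (esym (msz_pos m q'.+1), esym (msz_pos m q'.+1)) X).
  rewrite -cast_conj; congr castmx.
  exact: hX.
Qed.
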